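(* Let $\zeta\in(0,\infty)$ and for each $n\in\mathbb N$ let $(h_n,w^{(n)})\in\boldsymbol\Sigma([0,\zeta])$, converging to $(h,w)$ in $\mathbf C([0,\zeta],\mathbb R)\times\mathbf C([0,\zeta],\mathbf C_0)$ for the metric $\Delta$. Then $\lim_{n\to\infty}\lVert d_{h_n}-d_h\rVert=\lim_{n\to\infty}\lVert d_{h_n,w^{(n)}}-d_{h,w}\rVert=0$, where $\lVert\cdot\rVert$ is the uniform norm on $[0,\zeta]^2$.
   Context: $\mathbf C_0$: continuous functions $[0,\infty)\to\mathbb R$ with metric $\delta_{\mathtt u}(w,w')=\sum_{n\ge0}2^{-n-1}\min(1,\sup_{[0,n]}|w-w'|)$. $\Delta((h,w),(h',w'))=\sup_{[0,\zeta]}|h-h'|+\sup_{s\in[0,\zeta]}\delta_{\mathtt u}(w_s,w'_s)$. A snake $(h,w)\in\boldsymbol\Sigma([0,\zeta])$: $h\in\mathbf C([0,\zeta],\mathbb R)$, $h\ge0$, $h(0)=h(\zeta)=0$, $s\mapsto w_s\in\mathbf C_0$ continuous, with $w_s(r)=w_s(h(s))=:\widehat w_s$ for $r\ge h(s)$, and $w_{s_1}(r)=w_{s_2}(r)$ for all $r\in[0,m_h(s_1,s_2)]$, where $m_h(s_1,s_2)=\min_{[s_1\wedge s_2,s_1\vee s_2]}h$. Tree pseudo-metric $d_h(s_1,s_2)=h(s_1)+h(s_2)-2m_h(s_1,s_2)$. Snake metric: $M_{h,w}(s_1,s_2)=\min\big(\min_{r\in[m_h(s_1,s_2),h(s_1)]}w_{s_1}(r),\min_{r\in[m_h(s_1,s_2),h(s_2)]}w_{s_2}(r)\big)$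 and $d_{h,w}(s_1,s_2)=\widehat w_{s_1}+\widehat w_{s_2}-2M_{h,w}(s_1,s_2)$. *)

(* Defs.v *)
From Stdlib Require Import Reals.
From Coquelicot Require Import Coquelicot.
Open Scope R_scope.

Definition supf (a b : R) (f : R -> R) : R :=
  real (Lub_Rbar (fun y => exists x, a <= x <= b /\ y = f x)).
Definition inff (a b : R) (f : R -> R) : R :=
  real (Glb_Rbar (fun y => exists x, a <= x <= b /\ y = f x)).
Definition supf2 (a b : R) (g : R -> R -> R) : R :=
  real (Lub_Rbar (fun y => exists x1 x2,
     a <= x1 <= b /\ a <= x2 <= b /\ y = g x1 x2)).

(* C_0: elements are functions R -> R, only their restriction to [0,oo) matters *)
Definition is_C0 (w : R -> R) : Prop :=
  forall x, 0 <= x -> forall eps, 0 < eps -> exists del, 0 < del /\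
    forall y, 0 <= y -> Rabs (y - x) < del -> Rabs (w y - w x) < eps.

Definition delta_u (w w' : R -> R) : R :=
  Series (fun n => (/ 2) ^ (n + 1) *
     Rmin 1 (supf 0 (INR n) (fun r => Rabs (w r - w' r)))).

Definition cont_on (a b : R) (f : R -> R) : Prop :=
  forall x, a <= x <= b -> forall eps, 0 < eps -> exists del, 0 < del /\
    forall y, a <= y <= b -> Rabs (y - x) < del -> Rabs (f y - f x) < eps.

Definition cont_path_on (a b : R) (w : R -> R -> R) : Prop :=
  forall x, a <= x <= b -> forall eps, 0 < eps -> exists del, 0 < del /\
    forall y, a <= y <= b -> Rabs (y - x) < del -> delta_u (w y) (w x) < eps.

Definition m_h (h : R -> R) (s1 s2 : R) : R := inff (Rmin s1 s2) (Rmax s1 s2) h.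

Definition d_h (h : R -> R) (s1 s2 : R) : R := h s1 + h s2 - 2 * m_h h s1 s2.

Definition M_hw (h : R -> R) (w : R -> R -> R) (s1 s2 : R) : R :=
  Rmin (inff (m_h h s1 s2) (h s1) (w s1)) (inff (m_h h s1 s2) (h s2) (w s2)).
Definition what (h : R -> R) (w : R -> R -> R) (s : R) : R := w s (h s).
Definition d_hw (h : R -> R) (w : R -> R -> R) (s1 s2 : R) : R :=
  what h w s1 + what h w s2 - 2 * M_hw h w s1 s2.

Definition is_snake (ζ : R) (h : R -> R) (w : R -> R -> R) : Prop :=
  cont_on 0 ζ h /\
  (forall s, 0 <= s <= ζ -> 0 <= h s) /\ h 0 = 0 /\ h ζ = 0 /\
  (forall s, 0 <= s <= ζ -> is_C0 (w s)) /\
  cont_path_on 0 ζ w /\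
  (forall s r, 0 <= s <= ζ -> h s <= r -> w s r = w s (h s)) /\
  (forall s1 s2 r, 0 <= s1 <= ζ -> 0 <= s2 <= ζ ->
     0 <= r <= m_h h s1 s2 -> w s1 r = w s2 r).

Definition DeltaS (ζ : R) (h : R -> R) (w : R -> R -> R)
    (h' : R -> R) (w' : R -> R -> R) : R :=
  supf 0 ζ (fun s => Rabs (h s - h' s)) +
  supf 0 ζ (fun s => delta_u (w s) (w' s)).

(* Main.v *)
Require Import Defs.
From Stdlib Require Import Reals Lra Lia Classical ClassicalEpsilon.
From Coquelicot Require Import Coquelicot.
Open Scope R_scope.

Lemma absle x c : Rabs x <= c -> -c <= x <= c.
Proof. unfold Rabs; destruct Rcase_abs; intros; lra. Qed.
Lemma leabs x c : -c <= x <= c -> Rabs x <= c.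
Proof. unfold Rabs; destruct Rcase_abs; intros; lra. Qed.
Lemma abslt x c : Rabs x < c -> -c < x < c.
Proof. unfold Rabs; destruct Rcase_abs; intros; lra. Qed.

Lemma lub_le (E : R -> Prop) M : (exists y, E y) -> (forall y, E y -> y <= M) ->
  real (Lub_Rbar E) <= M.
Proof.
  intros [y Hy] HM. destruct (Lub_Rbar_correct E) as [Hub Hl].
  assert (H1 : Rbar_le (Lub_Rbar E) M) by (apply Hl; intros x Hx; apply HM; auto).
  pose proof (Hub y Hy) as H2.
  destruct (Lub_Rbar E); simpl in *; try contradiction; auto.
Qed.

Lemma lub_ge (E : R -> Prop) M y : E y -> (forall y, E y -> y <= M) ->
  y <= real (Lub_Rbar E).
Proof.
  intros Hy HM. destruct (Lub_Rbar_correct E) as [Hub Hl].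
  assert (H1 : Rbar_le (Lub_Rbar E) M) by (apply Hl; intros x Hx; apply HM; auto).
  pose proof (Hub y Hy) as H2.
  destruct (Lub_Rbar E); simpl in *; try contradiction; auto.
Qed.

Lemma lub_nonneg (E : R -> Prop) : (exists y, E y) -> (forall y, E y -> 0 <= y) ->
  0 <= real (Lub_Rbar E).
Proof.
  intros [y Hy] HM. destruct (Lub_Rbar_correct E) as [Hub Hl].
  pose proof (Hub y Hy) as H2. specialize (HM y Hy).
  destruct (Lub_Rbar E); simpl in *; try contradiction; lra.
Qed.

Lemma glb_ge (E : R -> Prop) M : (exists y, E y) -> (forall y, E y -> M <= y) ->
  M <= real (Glb_Rbar E).
Proof.
  intros [y Hy] HM. destruct (Glb_Rbar_correct E) as [Hub Hl].
  assert (H1 : Rbar_le M (Glb_Rbar E)) by (apply Hl; intros x Hx; apply HM; auto).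
  pose proof (Hub y Hy) as H2.
  destruct (Glb_Rbar E); simpl in *; try contradiction; auto.
Qed.

Lemma glb_le (E : R -> Prop) M y : E y -> (forall y, E y -> M <= y) ->
  real (Glb_Rbar E) <= y.
Proof.
  intros Hy HM. destruct (Glb_Rbar_correct E) as [Hub Hl].
  assert (H1 : Rbar_le M (Glb_Rbar E)) by (apply Hl; intros x Hx; apply HM; auto).
  pose proof (Hub y Hy) as H2.
  destruct (Glb_Rbar E); simpl in *; try contradiction; auto.
Qed.

Lemma supf_le a b f M : a <= b -> (forall x, a <= x <= b -> f x <= M) -> supf a b f <= M.
Proof.
  intros Hab H. apply lub_le.
  - exists (f a), a; split; [lra|auto].
  - intros y [x [Hx ->]]; auto.
Qed.

Lemma supf_ge a b f x M : a <= x <= b -> (forall y, a <= y <= b -> f y <= M) ->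
  f x <= supf a b f.
Proof.
  intros Hx H. apply (lub_ge _ M).
  - exists x; auto.
  - intros y [z [Hz ->]]; auto.
Qed.

Lemma supf_nonneg a b f : a <= b -> (forall x, a <= x <= b -> 0 <= f x) -> 0 <= supf a b f.
Proof.
  intros Hab H. apply lub_nonneg.
  - exists (f a), a; split; [lra|auto].
  - intros y [x [Hx ->]]; auto.
Qed.

Lemma inff_ge a b f M : a <= b -> (forall x, a <= x <= b -> M <= f x) -> M <= inff a b f.
Proof.
  intros Hab H. apply glb_ge.
  - exists (f a), a; split; [lra|auto].
  - intros y [x [Hx ->]]; auto.
Qed.

Lemma inff_le a b f x M : a <= x <= b -> (forall y, a <= y <= b -> M <= f y) ->
  inff a b f <= f x.
Proof.
  intros Hx H. apply (glb_le _ M).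
  - exists x; auto.
  - intros y [z [Hz ->]]; auto.
Qed.

Lemma supf2_le a b g M : a <= b -> (forall x1 x2, a <= x1 <= b -> a <= x2 <= b -> g x1 x2 <= M) ->
  supf2 a b g <= M.
Proof.
  intros Hab H. apply lub_le.
  - exists (g a a), a, a; repeat split; lra.
  - intros y [x1 [x2 [H1 [H2 ->]]]]; auto.
Qed.

Lemma supf2_nonneg a b g : a <= b -> (forall x1 x2, a <= x1 <= b -> a <= x2 <= b -> 0 <= g x1 x2) ->
  0 <= supf2 a b g.
Proof.
  intros Hab H. apply lub_nonneg.
  - exists (g a a), a, a; repeat split; lra.
  - intros y [x1 [x2 [H1 [H2 ->]]]]; auto.
Qed.

Lemma inff_close a b f a' b' g e Mf Mg : a <= b -> a' <= b' ->
  (forall x, a <= x <= b -> Mf <= f x) -> (forall y, a' <= y <= b' -> Mg <= g y) ->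
  (forall x, a <= x <= b -> exists y, a' <= y <= b' /\ g y <= f x + e) ->
  (forall y, a' <= y <= b' -> exists x, a <= x <= b /\ f x <= g y + e) ->
  Rabs (inff a b f - inff a' b' g) <= e.
Proof.
  intros Hab Hab' Hf Hg H1 H2. apply leabs.
  assert (A : inff a' b' g - e <= inff a b f).
  { apply inff_ge; auto. intros x Hx. destruct (H1 x Hx) as [y [Hy Hy']].
    pose proof (inff_le a' b' g y Mg Hy Hg). lra. }
  assert (B : inff a b f - e <= inff a' b' g).
  { apply inff_ge; auto. intros y Hy. destruct (H2 y Hy) as [x [Hx Hx']].
    pose proof (inff_le a b f x Mf Hx Hf). lra. }
  lra.
Qed.

Definition clamp (a b x : R) := Rmax a (Rmin b x).
Lemma clamp_in a b x : a <= b -> a <= clamp a b x <= b.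
Proof. unfold clamp, Rmax, Rmin; intros; repeat destruct Rle_dec; lra. Qed.
Lemma clamp_id a b x : a <= x <= b -> clamp a b x = x.
Proof. unfold clamp, Rmax, Rmin; intros; repeat destruct Rle_dec; lra. Qed.
Lemma clamp_lip a b x y : Rabs (clamp a b y - clamp a b x) <= Rabs (y - x).
Proof. unfold clamp, Rmax, Rmin; repeat destruct Rle_dec; unfold Rabs;
  repeat destruct Rcase_abs; lra. Qed.
Lemma clamp_dist a1 b1 a2 b2 c x : a1 <= x <= b1 -> a2 <= b2 ->
  Rabs (a1 - a2) <= c -> Rabs (b1 - b2) <= c -> Rabs (clamp a2 b2 x - x) <= c.
Proof.
  intros Hx Hab H1 H2. apply absle in H1. apply absle in H2. apply leabs.
  unfold clamp, Rmax, Rmin; repeat destruct Rle_dec; lra.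
Qed.

Lemma cont_ext a b f : a <= b -> cont_on a b f ->
  forall c, continuity_pt (fun x => f (clamp a b x)) c.
Proof.
  intros Hab Hf c. unfold continuity_pt, continue_in, limit1_in, limit_in.
  intros eps Heps. simpl. unfold R_dist.
  destruct (Hf (clamp a b c) (clamp_in a b c Hab) eps Heps) as [del [Hd H]].
  exists del. split; auto. intros x [_ Hx]. apply H.
  - apply clamp_in; auto.
  - eapply Rle_lt_trans; [apply clamp_lip|auto].
Qed.

Lemma cont_bounded a b f : a <= b -> cont_on a b f ->
  exists M, forall x, a <= x <= b -> Rabs (f x) <= M.
Proof.
  intros Hab Hf.
  destruct (continuity_ab_maj _ a b Hab (fun c _ => cont_ext a b f Hab Hf c)) as [Mx [HM _]].
  destruct (continuity_ab_min _ a b Hab (fun c _ => cont_ext a b f Hab Hf c)) as [mx [Hm _]].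
  exists (Rabs (f (clamp a b Mx)) + Rabs (f (clamp a b mx))).
  intros x Hx. specialize (HM x Hx). specialize (Hm x Hx).
  rewrite (clamp_id a b x) in HM, Hm by auto.
  apply leabs. pose proof (Rabs_pos (f (clamp a b Mx))). pose proof (Rabs_pos (f (clamp a b mx))).
  pose proof (Rle_abs (f (clamp a b Mx))). pose proof (Rle_abs (- f (clamp a b mx))).
  rewrite Rabs_Ropp in *. lra.
Qed.

Lemma cont_unif a b f : a <= b -> cont_on a b f -> forall eps, 0 < eps ->
  exists del, 0 < del /\ forall x y, a <= x <= b -> a <= y <= b ->
    Rabs (x - y) < del -> Rabs (f x - f y) < eps.
Proof.
  intros Hab Hf eps Heps.
  destruct (Heine (fun x => f (clamp a b x)) (fun c => a <= c <= b) (compact_P3 a b)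
     (fun c _ => cont_ext a b f Hab Hf c) (mkposreal eps Heps)) as [d Hd].
  exists d. split; [apply cond_pos|]. intros x y Hx Hy Hxy.
  pose proof (Hd x y Hx Hy Hxy) as H. simpl in H.
  rewrite (clamp_id a b x), (clamp_id a b y) in H by auto. auto.
Qed.

Lemma C0_cont K g : is_C0 g -> cont_on 0 K g.
Proof.
  intros Hg x Hx eps He. destruct (Hg x (proj1 Hx) eps He) as [d [Hd H]].
  exists d; split; auto. intros y Hy. apply H; lra.
Qed.

Definition dterm (f g : R -> R) (n : nat) : R :=
  (/ 2) ^ (n + 1) * Rmin 1 (supf 0 (INR n) (fun r => Rabs (f r - g r))).

Lemma dterm_bounds f g n : 0 <= dterm f g n <= (/ 2) ^ (n + 1).
Proof.
  unfold dterm.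
  assert (H0 : 0 <= supf 0 (INR n) (fun r => Rabs (f r - g r))).
  { apply supf_nonneg; [apply pos_INR|]. intros; apply Rabs_pos. }
  assert (Hp : 0 < (/ 2) ^ (n + 1)) by (apply pow_lt; lra).
  assert (0 <= Rmin 1 (supf 0 (INR n) (fun r => Rabs (f r - g r))) <= 1).
  { unfold Rmin; destruct Rle_dec; lra. }
  split; [apply Rmult_le_pos; lra|]. 
  rewrite <- (Rmult_1_r ((/2)^(n+1))) at 2. apply Rmult_le_compat_l; lra.
Qed.

Lemma geo_series : is_series (fun n => (/ 2) ^ (n + 1)) 1.
Proof.
  assert (H : is_series (fun n => scal (/2) ((/ 2) ^ n)) (scal (/2) (/ (1 - / 2)))).
  { apply (@is_series_scal_l R_AbsRing R_NormedModule). apply is_series_geom. rewrite Rabs_pos_eq; lra. }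
  replace 1 with (scal (/2) (/ (1 - / 2))).
  - eapply is_series_ext; [|exact H]. intros n. simpl. unfold scal; simpl.
    unfold mult; simpl. rewrite Nat.add_1_r. simpl. ring.
  - unfold scal; simpl; unfold mult; simpl. field.
Qed.

Lemma ex_dterm f g : ex_series (dterm f g).
Proof.
  apply (@ex_series_le R_AbsRing R_CompleteNormedModule _ (fun n => (/ 2) ^ (n + 1))).
  - intros n. unfold norm; simpl. unfold abs; simpl. 
    destruct (dterm_bounds f g n). rewrite Rabs_pos_eq; lra.
  - eexists; apply geo_series.
Qed.

Lemma delta_u_le1 f g : delta_u f g <= 1.
Proof.
  unfold delta_u. fold (dterm f g).
  rewrite <- (is_series_unique _ _ geo_series).
  apply Series_le; [apply dterm_bounds|]. eexists; apply geo_series.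
Qed.

Lemma delta_u_ge f g K : dterm f g K <= delta_u f g.
Proof.
  unfold delta_u. fold (dterm f g).
  rewrite (Series_incr_n (dterm f g) (S K)); [|lia|apply ex_dterm].
  simpl Init.Nat.pred.
  assert (A : dterm f g K <= sum_f_R0 (dterm f g) K).
  { destruct K; simpl; [lra|].
    pose proof (cond_pos_sum (dterm f g) K (fun n => proj1 (dterm_bounds f g n))). lra. }
  assert (B : 0 <= Series (fun k => dterm f g (S K + k))).
  { assert (E : Series (fun _ : nat => 0) = 0).
    { transitivity (Series (fun n : nat => 0 * 0)); [apply Series_ext; intros; ring|]. rewrite Series_scal_l; ring. }
    rewrite <- E. apply Series_le.
    - intros n; split; [lra|apply dterm_bounds].
    - apply (ex_series_incr_n (dterm f g) (S K)). apply ex_dterm. }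
  lra.
Qed.

Lemma delta_u_nonneg f g : 0 <= delta_u f g.
Proof. eapply Rle_trans; [apply (dterm_bounds f g 0)|apply delta_u_ge]. Qed.

Lemma delta_small f g K e : is_C0 f -> is_C0 g -> 0 < e ->
  delta_u f g < (/ 2) ^ (K + 1) * Rmin 1 e ->
  forall r, 0 <= r <= INR K -> Rabs (f r - g r) < e.
Proof.
  intros Hf Hg He Hd r Hr.
  pose proof (delta_u_ge f g K) as HK. unfold dterm in HK.
  set (S := supf 0 (INR K) (fun r => Rabs (f r - g r))) in *.
  assert (Hp : 0 < (/ 2) ^ (K + 1)) by (apply pow_lt; lra).
  assert (HS : S < e).
  { destruct (Rlt_or_le S e) as [|Hle]; auto. exfalso.
    assert (Rmin 1 e <= Rmin 1 S) by (unfold Rmin; repeat destruct Rle_dec; lra).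
    pose proof (Rmult_le_compat_l _ _ _ (Rlt_le _ _ Hp) H). lra. }
  destruct (cont_bounded 0 (INR K) f (pos_INR K) (C0_cont _ _ Hf)) as [Mf HMf].
  destruct (cont_bounded 0 (INR K) g (pos_INR K) (C0_cont _ _ Hg)) as [Mg HMg].
  assert (Rabs (f r - g r) <= S).
  { apply (supf_ge 0 (INR K) (fun r => Rabs (f r - g r)) r (Mf + Mg) Hr).
    intros y Hy. eapply Rle_trans; [apply Rabs_triang|]. rewrite Rabs_Ropp.
    specialize (HMf y Hy); specialize (HMg y Hy). lra. }
  lra.
Qed.

Lemma equicont z w K : (forall s, 0 <= s <= z -> is_C0 (w s)) -> cont_path_on 0 z w ->
  forall e, 0 < e -> exists eta, 0 < eta /\ forall s r r', 0 <= s <= z ->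
    0 <= r <= INR K -> 0 <= r' <= INR K -> Rabs (r - r') < eta ->
    Rabs (w s r - w s r') < e.
Proof.
  intros Hw Hwp e He.
  assert (Hdel : forall t, exists d : posreal, 0 <= t <= z ->
     (forall s, 0 <= s <= z -> Rabs (s - t) < d -> forall r, 0 <= r <= INR K ->
        Rabs (w s r - w t r) < e / 3) /\
     (forall r r', 0 <= r <= INR K -> 0 <= r' <= INR K -> Rabs (r - r') < d ->
        Rabs (w t r - w t r') < e / 3)).
  { intros t. destruct (classic (0 <= t <= z)) as [Ht|Ht].
    - assert (Hc : 0 < (/ 2) ^ (K + 1) * Rmin 1 (e / 3)).
      { apply Rmult_lt_0_compat; [apply pow_lt; lra|]. unfold Rmin; destruct Rle_dec; lra. }
      destruct (Hwp t Ht _ Hc) as [d1 [Hd1 H1]].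
      destruct (cont_unif 0 (INR K) (w t) (pos_INR K) (C0_cont _ _ (Hw t Ht)) (e / 3))
        as [d2 [Hd2 H2]]; [lra|].
      exists (mkposreal (Rmin d1 d2) (Rmin_pos _ _ Hd1 Hd2)). intros _. simpl. split.
      + intros s Hs Hst r Hr. apply (delta_small (w s) (w t) K); auto; try lra.
        apply H1; auto. eapply Rlt_le_trans; [apply Hst|apply Rmin_l].
      + intros r r' Hr Hr' Hrr. apply H2; auto. eapply Rlt_le_trans; [apply Hrr|apply Rmin_r].
    - exists (mkposreal 1 Rlt_0_1). intros Hc; contradiction. }
  pose (delta := fun t => proj1_sig (constructive_indefinite_description _ (Hdel t))).
  destruct (compactness_value_1d 0 z delta) as [d Hd].
  exists d. split; [apply cond_pos|].
  intros s r r' Hs Hr Hr' Hrr.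
  apply NNPP. intro Hn. apply (Hd s Hs). intros [t [Ht [Hst Hdt]]]. apply Hn.
  pose proof (proj2_sig (constructive_indefinite_description _ (Hdel t)) Ht) as [P1 P2].
  fold (delta t) in P1, P2.
  pose proof (P1 s Hs Hst r Hr) as A1.
  pose proof (P1 s Hs Hst r' Hr') as A2.
  assert (A3 : Rabs (w t r - w t r') < e / 3) by (apply P2; auto; lra).
  apply abslt in A1; apply abslt in A2; apply abslt in A3.
  apply Rabs_def1; lra.
Qed.

Lemma m_h_nonneg z h s1 s2 : 0 <= s1 <= z -> 0 <= s2 <= z ->
  (forall s, 0 <= s <= z -> 0 <= h s) -> 0 <= m_h h s1 s2.
Proof.
  intros H1 H2 Hh. unfold m_h. apply inff_ge.
  - unfold Rmin, Rmax; repeat destruct Rle_dec; lra.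
  - intros x Hx. apply Hh. unfold Rmin, Rmax in Hx; repeat destruct Rle_dec; lra.
Qed.

Lemma m_h_le1 z h s1 s2 : 0 <= s1 <= z -> 0 <= s2 <= z ->
  (forall s, 0 <= s <= z -> 0 <= h s) -> m_h h s1 s2 <= h s1.
Proof.
  intros H1 H2 Hh. unfold m_h. apply (inff_le _ _ _ _ 0).
  - unfold Rmin, Rmax; repeat destruct Rle_dec; lra.
  - intros x Hx. apply Hh. unfold Rmin, Rmax in Hx; repeat destruct Rle_dec; lra.
Qed.

Lemma m_h_le2 z h s1 s2 : 0 <= s1 <= z -> 0 <= s2 <= z ->
  (forall s, 0 <= s <= z -> 0 <= h s) -> m_h h s1 s2 <= h s2.
Proof.
  intros H1 H2 Hh. unfold m_h. apply (inff_le _ _ _ _ 0).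
  - unfold Rmin, Rmax; repeat destruct Rle_dec; lra.
  - intros x Hx. apply Hh. unfold Rmin, Rmax in Hx; repeat destruct Rle_dec; lra.
Qed.

Lemma m_h_close z h1 h2 c s1 s2 : 0 <= s1 <= z -> 0 <= s2 <= z ->
  (forall s, 0 <= s <= z -> 0 <= h1 s) -> (forall s, 0 <= s <= z -> 0 <= h2 s) ->
  (forall s, 0 <= s <= z -> Rabs (h1 s - h2 s) <= c) ->
  Rabs (m_h h1 s1 s2 - m_h h2 s1 s2) <= c.
Proof.
  intros H1 H2 Hh1 Hh2 Hc. unfold m_h.
  assert (Hin : forall x, Rmin s1 s2 <= x <= Rmax s1 s2 -> 0 <= x <= z).
  { intros x Hx. unfold Rmin, Rmax in Hx; repeat destruct Rle_dec; lra. }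
  assert (Hmm : Rmin s1 s2 <= Rmax s1 s2) by (unfold Rmin, Rmax; repeat destruct Rle_dec; lra).
  apply (inff_close _ _ _ _ _ _ _ 0 0); [exact Hmm|exact Hmm| | | |].
  - intros x Hx; apply Hh1; auto.
  - intros x Hx; apply Hh2; auto.
  - intros x Hx. exists x. split; auto. specialize (Hc x (Hin x Hx)). apply absle in Hc. lra.
  - intros x Hx. exists x. split; auto. specialize (Hc x (Hin x Hx)). apply absle in Hc. lra.
Qed.

Lemma inf_part (w1 w2 : R -> R) K c e eta a1 b1 a2 b2 :
  is_C0 w1 -> is_C0 w2 -> 0 <= a1 <= b1 -> b1 <= INR K -> 0 <= a2 <= b2 -> b2 <= INR K ->
  Rabs (a1 - a2) <= c -> Rabs (b1 - b2) <= c -> c < eta ->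
  (forall r, 0 <= r <= INR K -> Rabs (w1 r - w2 r) < e) ->
  (forall r r', 0 <= r <= INR K -> 0 <= r' <= INR K -> Rabs (r - r') < eta ->
     Rabs (w2 r - w2 r') < e) ->
  Rabs (inff a1 b1 w1 - inff a2 b2 w2) <= 2 * e.
Proof.
  intros Hw1 Hw2 Ha1 Hb1 Ha2 Hb2 Hac Hbc Hce Hu Heq.
  destruct (cont_bounded 0 (INR K) w1 (pos_INR K) (C0_cont _ _ Hw1)) as [M1 HM1].
  destruct (cont_bounded 0 (INR K) w2 (pos_INR K) (C0_cont _ _ Hw2)) as [M2 HM2].
  apply (inff_close _ _ _ _ _ _ _ (- M1) (- M2)); [lra|lra| | | |].
  - intros x Hx. assert (0 <= x <= INR K) by lra. specialize (HM1 x H). apply absle in HM1; lra.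
  - intros x Hx. assert (0 <= x <= INR K) by lra. specialize (HM2 x H). apply absle in HM2; lra.
  - intros x Hx. exists (clamp a2 b2 x). split; [apply clamp_in; lra|].
    pose proof (clamp_in a2 b2 x (proj2 Ha2)) as Hy.
    pose proof (clamp_dist a1 b1 a2 b2 c x Hx (proj2 Ha2) Hac Hbc) as Hd.
    assert (A : Rabs (w2 (clamp a2 b2 x) - w2 x) < e) by (apply Heq; lra).
    assert (B : Rabs (w1 x - w2 x) < e) by (apply Hu; lra).
    apply abslt in A; apply abslt in B. lra.
  - intros y Hy. exists (clamp a1 b1 y). split; [apply clamp_in; lra|].
    pose proof (clamp_in a1 b1 y (proj2 Ha1)) as Hx.
    rewrite Rabs_minus_sym in Hac, Hbc.
    pose proof (clamp_dist a2 b2 a1 b1 c y Hy (proj2 Ha1) Hac Hbc) as Hd.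
    assert (A : Rabs (w2 (clamp a1 b1 y) - w2 y) < e) by (apply Heq; lra).
    assert (B : Rabs (w1 (clamp a1 b1 y) - w2 (clamp a1 b1 y)) < e) by (apply Hu; lra).
    apply abslt in A; apply abslt in B. lra.
Qed.

Lemma snake_close z h1 w1 h2 w2 K c e eta :
  (forall s, 0 <= s <= z -> 0 <= h1 s) -> (forall s, 0 <= s <= z -> 0 <= h2 s) ->
  (forall s, 0 <= s <= z -> Rabs (h1 s - h2 s) <= c) -> c < eta ->
  (forall s, 0 <= s <= z -> h1 s <= INR K) -> (forall s, 0 <= s <= z -> h2 s <= INR K) ->
  (forall s, 0 <= s <= z -> is_C0 (w1 s)) -> (forall s, 0 <= s <= z -> is_C0 (w2 s)) ->
  (forall s r, 0 <= s <= z -> 0 <= r <= INR K -> Rabs (w1 s r - w2 s r) < e) ->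
  (forall s r r', 0 <= s <= z -> 0 <= r <= INR K -> 0 <= r' <= INR K -> Rabs (r - r') < eta ->
     Rabs (w2 s r - w2 s r') < e) ->
  forall s1 s2, 0 <= s1 <= z -> 0 <= s2 <= z ->
  Rabs (d_hw h1 w1 s1 s2 - d_hw h2 w2 s1 s2) <= 8 * e.
Proof.
  intros Hh1 Hh2 Hc Hce HK1 HK2 Hw1 Hw2 Hu Heq s1 s2 H1 H2.
  assert (Hwhat : forall s, 0 <= s <= z -> Rabs (what h1 w1 s - what h2 w2 s) <= 2 * e).
  { intros s Hs. unfold what.
    specialize (Hh1 s Hs); specialize (Hh2 s Hs); specialize (HK1 s Hs); specialize (HK2 s Hs).
    assert (A : Rabs (w1 s (h1 s) - w2 s (h1 s)) < e) by (apply Hu; auto; lra).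
    assert (B : Rabs (w2 s (h1 s) - w2 s (h2 s)) < e).
    { apply Heq; auto; try lra. eapply Rle_lt_trans; [apply Hc; auto|auto]. }
    apply abslt in A; apply abslt in B. apply leabs; lra. }
  assert (Hm := m_h_close z h1 h2 c s1 s2 H1 H2 Hh1 Hh2 Hc).
  pose proof (m_h_nonneg z h1 s1 s2 H1 H2 Hh1).
  pose proof (m_h_nonneg z h2 s1 s2 H1 H2 Hh2).
  pose proof (m_h_le1 z h1 s1 s2 H1 H2 Hh1).
  pose proof (m_h_le1 z h2 s1 s2 H1 H2 Hh2).
  pose proof (m_h_le2 z h1 s1 s2 H1 H2 Hh1).
  pose proof (m_h_le2 z h2 s1 s2 H1 H2 Hh2).
  assert (I1 : Rabs (inff (m_h h1 s1 s2) (h1 s1) (w1 s1) - inff (m_h h2 s1 s2) (h2 s1) (w2 s1)) <= 2 * e).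
  { apply (inf_part _ _ K c e eta); auto; try lra; try (apply Hc; auto);
      try (intros; apply Hu; auto); try (intros; apply Heq; auto); apply HK1; auto. }
  assert (I2 : Rabs (inff (m_h h1 s1 s2) (h1 s2) (w1 s2) - inff (m_h h2 s1 s2) (h2 s2) (w2 s2)) <= 2 * e).
  { apply (inf_part _ _ K c e eta); auto; try lra; try (apply Hc; auto);
      try (intros; apply Hu; auto); try (intros; apply Heq; auto); apply HK1; auto. }
  assert (HM : Rabs (M_hw h1 w1 s1 s2 - M_hw h2 w2 s1 s2) <= 2 * e).
  { unfold M_hw. apply absle in I1; apply absle in I2. apply leabs.
    unfold Rmin; repeat destruct Rle_dec; lra. }
  unfold d_hw. pose proof (Hwhat s1 H1) as W1. pose proof (Hwhat s2 H2) as W2.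
  apply absle in W1; apply absle in W2; apply absle in HM. apply leabs. lra.
Qed.

Theorem lemma4p20 (ζ : R) (hn : nat -> R -> R) (wn : nat -> R -> R -> R)
  (h : R -> R) (w : R -> R -> R) :
  0 < ζ ->
  (forall n, is_snake ζ (hn n) (wn n)) ->
  cont_on 0 ζ h ->
  (forall s, 0 <= s <= ζ -> is_C0 (w s)) ->
  cont_path_on 0 ζ w ->
  is_lim_seq (fun n => DeltaS ζ (hn n) (wn n) h w) 0 ->
  is_lim_seq (fun n => supf2 0 ζ (fun s1 s2 => Rabs (d_h (hn n) s1 s2 - d_h h s1 s2))) 0 /\
  is_lim_seq (fun n => supf2 0 ζ
      (fun s1 s2 => Rabs (d_hw (hn n) (wn n) s1 s2 - d_hw h w s1 s2))) 0.
Proof.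
  intros Hz Hsn Hh Hw Hwp Hlim.
  set (a := fun n => supf 0 ζ (fun s => Rabs (hn n s - h s))).
  set (b := fun n => supf 0 ζ (fun s => delta_u (wn n s) (w s))).
  assert (Ha0 : forall n, 0 <= a n).
  { intros n; apply supf_nonneg; [lra|]. intros; apply Rabs_pos. }
  assert (Hb0 : forall n, 0 <= b n).
  { intros n; apply supf_nonneg; [lra|]. intros; apply delta_u_nonneg. }
  destruct (cont_bounded 0 ζ h (Rlt_le _ _ Hz) Hh) as [Hb HHb].
  assert (Hah : forall n s, 0 <= s <= ζ -> Rabs (hn n s - h s) <= a n).
  { intros n s Hs.
    destruct (Hsn n) as [Hc _].
    destruct (cont_bounded 0 ζ (hn n) (Rlt_le _ _ Hz) Hc) as [Mn HMn].
    apply (supf_ge 0 ζ (fun s => Rabs (hn n s - h s)) s (Mn + Hb) Hs).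
    intros y Hy. eapply Rle_trans; [apply Rabs_triang|]. rewrite Rabs_Ropp.
    specialize (HMn y Hy); specialize (HHb y Hy). lra. }
  assert (Hbw : forall n s, 0 <= s <= ζ -> delta_u (wn n s) (w s) <= b n).
  { intros n s Hs. apply (supf_ge 0 ζ (fun s => delta_u (wn n s) (w s)) s 1 Hs).
    intros; apply delta_u_le1. }
  assert (Halim : is_lim_seq a 0).
  { apply (is_lim_seq_le_le (fun _ => 0) a (fun n => DeltaS ζ (hn n) (wn n) h w)); auto.
    - intros n; split; auto. unfold DeltaS. fold (a n) (b n). specialize (Hb0 n). lra.
    - apply is_lim_seq_const. }
  assert (Hblim : is_lim_seq b 0).
  { apply (is_lim_seq_le_le (fun _ => 0) b (fun n => DeltaS ζ (hn n) (wn n) h w)); auto.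
    - intros n; split; auto. unfold DeltaS. fold (a n) (b n). specialize (Ha0 n). lra.
    - apply is_lim_seq_const. }
  apply is_lim_seq_spec in Halim. apply is_lim_seq_spec in Hblim.
  assert (Hhn0 : forall n s, 0 <= s <= ζ -> 0 <= hn n s).
  { intros n s Hs. destruct (Hsn n) as [_ [H _]]. auto. }
  assert (Hh0 : forall s, 0 <= s <= ζ -> 0 <= h s).
  { intros s Hs. destruct (Rle_or_lt 0 (h s)) as [|Hneg]; auto. exfalso.
    destruct (Halim (mkposreal (- h s) ltac:(lra))) as [N HN].
    specialize (HN N (Nat.le_refl N)). simpl in HN.
    specialize (Hah N s Hs). specialize (Hhn0 N s Hs).
    apply abslt in HN. apply absle in Hah. lra. }
  split.
  - apply (is_lim_seq_le_le (fun _ => 0) _ (fun n => 4 * a n)).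
    + intros n. split.
      * apply supf2_nonneg; [lra|]. intros; apply Rabs_pos.
      * apply supf2_le; [lra|]. intros s1 s2 H1 H2.
        pose proof (m_h_close ζ (hn n) h (a n) s1 s2 H1 H2 (Hhn0 n) Hh0 (Hah n)) as Hm.
        pose proof (Hah n s1 H1) as A1. pose proof (Hah n s2 H2) as A2.
        unfold d_h. apply absle in Hm; apply absle in A1; apply absle in A2.
        apply leabs. lra.
    + apply is_lim_seq_const.
    + replace (Finite 0) with (Rbar_mult 4 0) by (simpl; f_equal; ring).
      apply is_lim_seq_scal_l. apply is_lim_seq_spec. exact Halim.
  - apply is_lim_seq_spec. intros eps.
    set (e := eps / 10).
    assert (He : 0 < e) by (unfold e; pose proof (cond_pos eps); lra).
    assert (HHb0 : 0 <= Hb) by (specialize (HHb 0 ltac:(lra)); pose proof (Rabs_pos (h 0)); lra).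
    destruct (nfloor_ex (Hb + 1) ltac:(lra)) as [K0 HK0].
    set (K := S K0).
    assert (HK : Hb + 1 <= INR K) by (unfold K; rewrite S_INR; lra).
    destruct (equicont ζ w K Hw Hwp e He) as [eta [Heta Heq]].
    assert (Hc : 0 < (/ 2) ^ (K + 1) * Rmin 1 e).
    { apply Rmult_lt_0_compat; [apply pow_lt; lra|]. unfold Rmin; destruct Rle_dec; lra. }
    destruct (Hblim (mkposreal _ Hc)) as [N2 HN2].
    assert (Hm1 : 0 < Rmin 1 eta) by (unfold Rmin; destruct Rle_dec; lra).
    destruct (Halim (mkposreal _ Hm1)) as [N1 HN1].
    exists (Nat.max N1 N2). intros n Hn.
    specialize (HN1 n ltac:(lia)). specialize (HN2 n ltac:(lia)). simpl in HN1, HN2.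
    rewrite Rminus_0_r in HN1, HN2. rewrite Rabs_pos_eq in HN1, HN2 by auto.
    assert (Han1 : a n < 1) by (eapply Rlt_le_trans; [apply HN1|apply Rmin_l]).
    assert (Haneta : a n < eta) by (eapply Rlt_le_trans; [apply HN1|apply Rmin_r]).
    assert (Hsup : 0 <= supf2 0 ζ (fun s1 s2 => Rabs (d_hw (hn n) (wn n) s1 s2 - d_hw h w s1 s2)) <= 8 * e).
    { split.
      - apply supf2_nonneg; [lra|]. intros; apply Rabs_pos.
      - apply supf2_le; [lra|]. intros s1 s2 H1 H2.
        destruct (Hsn n) as [_ [_ [_ [_ [HC0 _]]]]].
        apply (snake_close ζ (hn n) (wn n) h w K (a n) e eta); auto.
        + intros s Hs. specialize (Hah n s Hs). specialize (HHb s Hs).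
          apply absle in Hah; apply absle in HHb. lra.
        + intros s Hs. specialize (HHb s Hs). apply absle in HHb. lra.
        + intros s r Hs Hr. apply (delta_small _ _ K); auto.
          eapply Rle_lt_trans; [apply Hbw; auto|auto]. }
    rewrite Rminus_0_r, Rabs_pos_eq by lra. unfold e in Hsup.
    pose proof (cond_pos eps). lra.
Qed.
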